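(* Let $k\ge3$, and let $\nu_0$ be an initial distribution of the $S_k$ shuffle on $\mathcal S_N$ such that $\sigma\mapsto\nu_0(\sigma)/\mu_N(\sigma)$ is increasing with respect to $\succeq$. Let $\mathcal C$ be a censoring scheme and let $\nu^{\mathcal C}_t$ be the law at time $t$ of the censored $S_k$ shuffle (with respect to $\mathcal C$) started from $\nu_0$. Then for every $t\ge0$ the function $\sigma\mapsto\nu^{\mathcal C}_t(\sigma)/\mu_N(\sigma)$ is increasing with respect to $\succeq$, and the censoring inequality holds: for every $t\ge0$ and every fixed realization of the update times, the law at time $t$ of the censored dynamics stochastically dominates (with respect to $\succeq$) the law at time $t$ of the uncensored $S_k$ shuffle, both started from $\nu_0$ and driven by these same update times.
   Context: $\mathcal S_N$ is the symmetric group on $[N]$, $\sigma(z)$ the label of the card at position $z$; $\mu_N$ the uniform measure. The $S_k$ shuffle: each block $\{i,\dots,i+k-1\}$, $1\le i\le N-k+1$, has an independent rate-1 Poisson clock (the update times); when it rings the cards in the block are rearranged by a uniform element of $\mathcal S_k$. Height function $h_\sigma(x,y)=\sum_{z=1}^x\mathbf 1\{\sigma(z)\le y\}-xy/N$; partial order: $\sigma\succeq\sigma'$ iff $h_\sigma(x,y)\ge h_{\sigma'}(x,y)$ for all $x,y\in[N]$. A function $f$ is increasing if $\sigma\succeq\sigma'$ implies $f(\sigma)\ge f(\sigma')$; a measure $\mu$ stochastically dominates $\nu$ if $\mu(A)\ge\nu(A)$ for every set $A$ that is increasing (upward closed) for $\succeq$. A censoring scheme is a càdlàg map $\mathcal C:[0,\infty)\to\mathcal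 P(E)$, $E=\{\{x,x+1\}:x\in[N-1]\}$. Censored dynamics: when at time $t$ the clock of an interval $\mathcal I=[i,j]$ rings, if no edge $\{x,x+1\}\in\mathcal C_t$ has both endpoints in $\mathcal I$, the cards in $\mathcal I$ are uniformly reshuffled as usual; otherwise $\mathcal I$ is split into the maximal subintervals $[i_m,i_{m+1}-1]$ separated by the censored edges $\{i_m-1,i_m\}\in\mathcal C_t$, and the cards in each subinterval are independently uniformly reshuffled within that subinterval. *)

(* Defs.v *)
From mathcomp Require Import all_boot all_order all_algebra all_fingroup.
Set Implicit Arguments. Unset Strict Implicit. Unset Printing Implicit Defensive.
Import Order.TTheory GRing.Theory Num.Theory.
Local Open Scope ring_scope.

(* Conventions (0-based): positions and labels are 'I_N; a permutation
   s : {perm 'I_N} maps a position z to the label s z of the card there.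
   Paper position x (1..N) is 0-based x-1, label y is 0-based y-1. *)

Definition height (N : nat) (s : {perm 'I_N}) (x y : nat) : rat :=
  (#|[set z : 'I_N | (z < x)%N && (s z < y)%N]|)%:R - (x * y)%:R / N%:R.

Definition perm_ge (N : nat) (s s' : {perm 'I_N}) : Prop :=
  forall x y : nat, (1 <= x <= N)%N -> (1 <= y <= N)%N ->
    height s' x y <= height s x y.

Definition increasing (R : realFieldType) (N : nat) (f : {perm 'I_N} -> R) : Prop :=
  forall s s', perm_ge s s' -> f s' <= f s.

Definition upward_closed (N : nat) (A : {set {perm 'I_N}}) : Prop :=
  forall s s', s \in A -> perm_ge s' s -> s' \in A.

Definition stoch_dom (R : realFieldType) (N : nat) (nu nu' : {perm 'I_N} -> R) : Prop :=
  forall A : {set {perm 'I_N}}, upward_closed A ->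
    \sum_(s in A) nu' s <= \sum_(s in A) nu s.

Definition muN (R : realFieldType) (N : nat) (s : {perm 'I_N}) : R := 1 / (N`!)%:R.

Definition in_block (N k i : nat) (z : 'I_N) : bool := (i <= z < i + k)%N.

(* Edge e : 'I_(N.-1) is the edge {e, e+1} (0-based).  z and w lie in the same
   maximal subinterval of block i determined by the censored edges E. *)
Definition same_piece (N k i : nat) (E : {set 'I_(N.-1)}) (z w : 'I_N) : bool :=
  [&& in_block k i z, in_block k i w &
      [forall e : 'I_(N.-1), (e \in E) ==> ~~ ((minn z w <= e) && (e < maxn z w))%N]].

Definition allowed (N k i : nat) (E : {set 'I_(N.-1)}) : {set {perm 'I_N}} :=
  [set t : {perm 'I_N} | [forall z : 'I_N,
     if in_block k i z then same_piece k i E (t z) z else t z == z]].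

(* One (censored) update of block i with censored edge set E: the cards are
   rearranged by a uniform element t of [allowed k i E]; the new configuration is
   z |-> s (t z), i.e. (t * s)%g. *)
Definition step (R : realFieldType) (N k i : nat) (E : {set 'I_(N.-1)})
    (nu : {perm 'I_N} -> R) : {perm 'I_N} -> R :=
  fun s' => \sum_(t in allowed k i E) \sum_(s | (t * s)%g == s') nu s / (#|allowed k i E|)%:R.

(* law at time t given the realization [ups] of the update times up to t
   (list of (ring time, ringing block), in increasing time order) and the
   censoring scheme C. *)
Definition law (R : realFieldType) (N k : nat) (C : R -> {set 'I_(N.-1)})
    (ups : seq (R * 'I_(N.+1 - k))) (nu0 : {perm 'I_N} -> R) : {perm 'I_N} -> R :=
  foldl (fun nu (p : R * 'I_(N.+1 - k)) => step k p.2 (C p.1) nu) nu0 ups.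

Definition no_censoring (R : realFieldType) (N : nat) : R -> {set 'I_(N.-1)} :=
  fun _ => set0.

(* cadlag on [0, oo) for a function with values in a finite (discrete) set *)
Definition cadlag (R : realFieldType) (N : nat) (C : R -> {set 'I_(N.-1)}) : Prop :=
  forall s : R, 0 <= s ->
    (exists2 d : R, 0 < d & forall r, s <= r < s + d -> C r = C s) /\
    (0 < s -> exists E, exists2 d : R, 0 < d & forall r, s - d < r < s -> C r = E).

Definition realization (R : realFieldType) (N k : nat) (t : R)
    (ups : seq (R * 'I_(N.+1 - k))) : Prop :=
  sorted (fun p q : R * 'I_(N.+1 - k) => p.1 < q.1) ups /\
  all (fun p : R * 'I_(N.+1 - k) => (0 <= p.1) && (p.1 <= t)) ups.

(* Main.v *)
Require Import Defs.
From mathcomp Require Import all_boot all_order all_algebra all_fingroup.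
From mathcomp Require Import zify ring.
Import Order.TTheory GRing.Theory Num.Theory.
Set Implicit Arguments. Unset Strict Implicit. Unset Printing Implicit Defensive.

Definition cntI (N : nat) (s : {perm 'I_N}) (a b Y : nat) : nat :=
  \sum_(z : 'I_N | a <= z < b) (s z < Y).

Definition cnt (N : nat) (s : {perm 'I_N}) (X Y : nat) : nat := cntI s 0 X Y.

Definition ge' (N : nat) (s s' : {perm 'I_N}) : Prop :=
  forall X Y, cnt s' X Y <= cnt s X Y.

Lemma cntI_split N (s : {perm 'I_N}) a b d Y : a <= b <= d ->
  cntI s a b Y + cntI s b d Y = cntI s a d Y.
Proof.
move=> /andP[ab bd]; rewrite /cntI (bigID (fun z : 'I_N => z < b) (fun z : 'I_N => a <= z < d)) /=.
congr (_ + _); apply: eq_bigl => z /=; lia.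
Qed.

Lemma count_iota_int a b n :
  count (fun z => a <= z < b) (iota 0 n) = minn b n - a.
Proof.
elim: n => [|n IH]; first by rewrite /=; lia.
rewrite -addn1 iotaD count_cat IH /= add0n addn0; lia.
Qed.

Lemma count_int N a b : b <= N ->
  \sum_(z : 'I_N | a <= z < b) 1 = b - a.
Proof.
move=> bN; rewrite sum1_card cardE size_filter.
rewrite -(count_map val (fun z => a <= z < b)) /= -enumT val_enum_ord.
rewrite count_iota_int; lia.
Qed.

Lemma cntI_le N (s : {perm 'I_N}) a b Y : b <= N -> cntI s a b Y <= b - a.
Proof.
move=> bN; rewrite -(count_int a bN) /cntI; apply: leq_sum => z _; by case: (_ < _).
Qed.

Lemma cntI_all N (s : {perm 'I_N}) a b Y : b <= N ->
  (forall z : 'I_N, a <= z < b -> s z < Y) -> cntI s a b Y = b - a.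
Proof.
move=> bN h; rewrite -(count_int a bN) /cntI; apply: eq_bigr => z /h ->; done.
Qed.

Lemma cntI_none N (s : {perm 'I_N}) a b Y :
  (forall z : 'I_N, a <= z < b -> Y <= s z) -> cntI s a b Y = 0.
Proof.
move=> h; rewrite /cntI big1 // => z /h; rewrite leqNgt => /negbTE ->; done.
Qed.

Lemma cnt_perm_inv N (t s : {perm 'I_N}) X Y :
  (forall z, (t z < X) = (z < X)) -> cnt (t * s)%g X Y = cnt s X Y.
Proof.
move=> ht; rewrite /cnt /cntI.
rewrite (reindex_inj (@perm_inj _ t^-1)) /=.
apply: eq_big => z; first by rewrite -ht permKV.
by move=> _; rewrite permM permKV.
Qed.

Lemma swap_ge N (x : {perm 'I_N}) (z w : 'I_N) :
  z < w -> x w < x z -> ge' (tperm z w * x)%g x.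
Proof.
move=> zw xwz X Y.
case: (leqP X z) => hXz.
  rewrite cnt_perm_inv // => u; case: tpermP => [->|->|] //; lia.
case: (ltnP w X) => hwX.
  rewrite cnt_perm_inv // => u; case: tpermP => [->|->|] //; lia.
rewrite /cnt /cntI (bigD1 z) /=; last by lia.
rewrite [X in _ <= X](bigD1 z) /=; last by lia.
rewrite permM tpermL leq_add //; last first.
  rewrite leq_eqVlt; apply/orP; left; apply/eqP; apply: eq_bigr => u /andP[hu uz].
  rewrite permM tpermD //; first by rewrite eq_sym.
  apply/eqP => wu; move: hu; rewrite -wu; lia.
case: (ltnP (x z) Y) => h1; last by [].
by rewrite (_ : x w < Y = true) //; lia.
Qed.

Definition asc N (x : {perm 'I_N}) a b :=
  forall z z' : 'I_N, a <= z -> z < z' -> z' < b -> x z < x z'.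

Lemma asc_cnt N (x : {perm 'I_N}) a b X Y : b <= N -> a <= X <= b -> asc x a b ->
  minn (X - a) (cntI x a b Y) <= cntI x a X Y.
Proof.
move=> bN /andP[aX Xb] ha.
case: (boolP [exists z : 'I_N, (X <= z < b) && (x z < Y)]).
  case/existsP => z /andP[/andP[Xz zb] xzY].
  rewrite (@cntI_all _ _ a X) ?geq_minl //; first by lia.
  move=> z' /andP[az' z'X]; apply: ltn_trans xzY; apply: ha => //; lia.
rewrite negb_exists => /forallP hn.
rewrite -(@cntI_split _ _ a X b) ?aX ?Xb // (@cntI_none _ _ X b) ?addn0 ?geq_minr //.
move=> z hz; move: (hn z); by rewrite hz /= -leqNgt.
Qed.

Lemma sorted_ge N (x x' : {perm 'I_N}) a b : a <= b <= N -> asc x a b ->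
  (forall X Y, (X <= a) || (b <= X) -> cnt x' X Y <= cnt x X Y) -> ge' x x'.
Proof.
move=> /andP[ab bN] ha hout X Y.
case: (boolP ((X <= a) || (b <= X))) => hX; first exact: hout.
have aXb : a <= X <= b by lia.
have h1 : cnt x' a Y <= cnt x a Y by apply: hout; rewrite leqnn.
have h2 : cnt x' b Y <= cnt x b Y by apply: hout; rewrite leqnn orbT.
have h3 := asc_cnt Y bN aXb ha.
move: h1 h2; rewrite /cnt.
have e1 := @cntI_split _ x 0 a X Y. have e2 := @cntI_split _ x' 0 a X Y.
have e3 := @cntI_split _ x 0 a b Y. have e4 := @cntI_split _ x' 0 a b Y.
have e5 := @cntI_split _ x' a X b Y.
have h4 := @cntI_le _ x' a X Y (leq_trans (proj2 (andP aXb)) bN).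
have f0 : 0 <= a <= X by lia. have f1 : 0 <= a <= b by lia. have f2 : a <= X <= b by lia.
move: (e1 f0) (e2 f0) (e3 f1) (e4 f1) (e5 f2) => {e1 e2 e3 e4 e5}.
lia.
Qed.

Lemma card_cnt N (s : {perm 'I_N}) X Y :
  #|[set z : 'I_N | (z < X) && (s z < Y)]| = cnt s X Y.
Proof.
rewrite /cnt /cntI -sum1_card big_mkcond [RHS]big_mkcond /=.
apply: eq_bigr => z _; rewrite inE; by case: (z < X); case: (s z < Y).
Qed.

Lemma cnt_clamp N (s : {perm 'I_N}) X Y : cnt s X Y = cnt s (minn X N) (minn Y N).
Proof.
rewrite /cnt /cntI; apply: eq_big => z.
  have := ltn_ord z; lia.
move=> _; have := ltn_ord (s z); lia.
Qed.

Lemma cnt_X0 N (s : {perm 'I_N}) Y : cnt s 0 Y = 0.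
Proof. by rewrite /cnt /cntI big_pred0 // => z; rewrite ltn0 andbF. Qed.

Lemma cnt_Y0 N (s : {perm 'I_N}) X : cnt s X 0 = 0.
Proof. by rewrite /cnt /cntI big1 // => z. Qed.

Local Open Scope ring_scope.

Lemma perm_ge_ge' N (s s' : {perm 'I_N}) : perm_ge s s' <-> ge' s s'.
Proof.
split.
  move=> h X Y; rewrite (cnt_clamp s) (cnt_clamp s').
  case: (posnP (minn X N)) => [->|hX]; first by rewrite cnt_X0.
  case: (posnP (minn Y N)) => [->|hY]; first by rewrite cnt_Y0.
  have := h (minn X N) (minn Y N).
  rewrite /height !card_cnt lerD2r ler_nat; apply; apply/andP; split => //; exact: geq_minr.
move=> h x y _ _; rewrite /height !card_cnt lerD2r ler_nat; exact: h.
Qed.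

Local Close Scope ring_scope.

Lemma sp_refl N k i E (z : 'I_N) : in_block k i z -> same_piece k i E z z.
Proof.
move=> hz; rewrite /same_piece hz /=; apply/forallP => e; apply/implyP => _; lia.
Qed.

Lemma sp_sym N k i E (z w : 'I_N) : same_piece k i E z w = same_piece k i E w z.
Proof. by rewrite /same_piece minnC maxnC andbCA. Qed.

Lemma sp_trans N k i E (z w v : 'I_N) :
  same_piece k i E z w -> same_piece k i E w v -> same_piece k i E z v.
Proof.
rewrite /same_piece => /and3P[hz hw /forallP h1] /and3P[_ hv /forallP h2].
rewrite hz hv /=; apply/forallP => e; apply/implyP => he.
move: (h1 e) (h2 e); rewrite he /= => a b; lia.
Qed.

Lemma sp_block N k i E (z w : 'I_N) : same_piece k i E z w -> in_block k i z && in_block k i w.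
Proof. by case/and3P => -> ->. Qed.

Lemma allowedP N k i E (t : {perm 'I_N}) :
  reflect (forall z, if in_block k i z then same_piece k i E (t z) z else t z == z)
          (t \in allowed k i E).
Proof. rewrite inE; exact: forallP. Qed.

Lemma allowed_group N k i E : group_set (allowed (N:=N) k i E).
Proof.
apply/group_setP; split.
  apply/allowedP => z; case: ifP => h; rewrite perm1 //; exact: sp_refl.
move=> t1 t2 /allowedP h1 /allowedP h2; apply/allowedP => z; rewrite permM.
move: (h1 z); case: ifP => hz.
  move=> s1; have := h2 (t1 z); have /andP[-> _] := sp_block s1.
  move=> s2; exact: sp_trans s2 s1.
move/eqP => ->; move: (h2 z); rewrite hz //.
Qed.

Canonical grp N k i E : {group {perm 'I_N}} := Group (@allowed_group N k i E).

Local Open Scope ring_scope.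

Definition avg (R : realFieldType) N (H : {set {perm 'I_N}}) (f : {perm 'I_N} -> R) s : R :=
  (\sum_(t in H) f (t * s)%g) / (#|H|)%:R.

Lemma sum_mulr_group (R : realFieldType) N (H : {group {perm 'I_N}}) (F : {perm 'I_N} -> R) u :
  u \in H -> \sum_(t in H) F (t * u)%g = \sum_(t in H) F t.
Proof.
move=> uH; rewrite [RHS](reindex_inj (mulIg u)) /=.
by apply: eq_bigl => t; rewrite groupMr.
Qed.

Lemma sum_mull_group (R : realFieldType) N (H : {group {perm 'I_N}}) (F : {perm 'I_N} -> R) u :
  u \in H -> \sum_(t in H) F (u * t)%g = \sum_(t in H) F t.
Proof.
move=> uH; rewrite [RHS](reindex_inj (mulgI u)) /=.
by apply: eq_bigl => t; rewrite groupMl.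
Qed.

Lemma cardH_neq0 (R : realFieldType) N (H : {group {perm 'I_N}}) : (#|H|)%:R != 0 :> R.
Proof. by rewrite pnatr_eq0 -lt0n cardG_gt0. Qed.

Lemma avg_inv (R : realFieldType) N (H : {group {perm 'I_N}}) (f : {perm 'I_N} -> R) u s :
  u \in H -> avg H f (u * s)%g = avg H f s.
Proof.
move=> uH; rewrite /avg; congr (_ / _).
by rewrite -(sum_mulr_group (fun t => f (t * s)%g) uH); apply: eq_bigr => t _; rewrite mulgA.
Qed.

Lemma avg_fix (R : realFieldType) N (H : {group {perm 'I_N}}) (f : {perm 'I_N} -> R) s :
  (forall t, t \in H -> f (t * s)%g = f s) -> avg H f s = f s.
Proof.
move=> h; rewrite /avg (eq_bigr (fun _ => f s)) // sumr_const -[X in X / _]mulr_natr mulfK //.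
exact: cardH_neq0.
Qed.

Lemma avg_sum (R : realFieldType) N (H : {group {perm 'I_N}}) (f : {perm 'I_N} -> R) :
  \sum_s avg H f s = \sum_s f s.
Proof.
rewrite /avg -mulr_suml exchange_big /=.
rewrite (eq_bigr (fun _ => \sum_s f s)); last first.
  by move=> t _; rewrite [in RHS](reindex_inj (mulgI t)).
by rewrite sumr_const -[X in X / _]mulr_natr mulfK // cardH_neq0.
Qed.

Lemma avg_adj (R : realFieldType) N (H : {group {perm 'I_N}}) (f g : {perm 'I_N} -> R) :
  \sum_s avg H f s * g s = \sum_s f s * avg H g s.
Proof.
rewrite /avg.
under eq_bigr do rewrite mulrAC mulr_suml.
under [RHS]eq_bigr do rewrite mulrA mulr_sumr.
rewrite -!mulr_suml; congr (_ * _).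
rewrite exchange_big [RHS]exchange_big /=.
rewrite [RHS](reindex_inj invg_inj) /=.
rewrite [RHS](eq_bigl (fun t => t \in H)); last by move=> t; rewrite groupV.
apply: eq_bigr => t tH.
rewrite [RHS](reindex_inj (mulgI t)) /=; apply: eq_bigr => s _.
by rewrite mulgA mulVg mul1g.
Qed.

Lemma avg_comp (R : realFieldType) N (K H : {group {perm 'I_N}}) (f : {perm 'I_N} -> R) s :
  K \subset H -> avg H (avg K f) s = avg H f s.
Proof.
move=> KH; rewrite /avg -mulr_suml exchange_big /=.
rewrite (eq_bigr (fun u => \sum_(t in H) f (t * s)%g)); last first.
  move=> u uK; rewrite -(sum_mull_group (fun t => f (t * s)%g) (subsetP KH u uK)).
  by apply: eq_bigr => t _; rewrite mulgA.
rewrite sumr_const -[X in X / _ / _]mulr_natr mulfK //; exact: cardH_neq0.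
Qed.

Lemma avg_fixf (R : realFieldType) N (H : {group {perm 'I_N}}) (f : {perm 'I_N} -> R) :
  (forall t s, t \in H -> f (t * s)%g = f s) -> forall s, avg H f s = f s.
Proof. move=> h s; apply: avg_fix => t tH; exact: h. Qed.

Lemma step_avg (R : realFieldType) N k i E (nu : {perm 'I_N} -> R) s' :
  step k i E nu s' = avg (grp k i E) nu s'.
Proof.
rewrite /step /avg mulr_suml /=.
rewrite [RHS](reindex_inj invg_inj) /=.
rewrite [RHS](eq_bigl (fun t => t \in allowed k i E)); last by move=> t; rewrite groupV.
apply: eq_bigr => t _.
rewrite (eq_bigl (fun s => s == (t^-1 * s')%g)); last first.
  by move=> s; apply/eqP/eqP => [<-|->]; rewrite ?mulKg ?mulKVg.
by rewrite big_pred1_eq.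
Qed.

Local Close Scope ring_scope.

Lemma sp_succ N len i E (z w : 'I_N) : z < i + len -> w < i + len ->
  same_piece len.+1 i E z w = same_piece len i E z w.
Proof.
move=> hz hw; rewrite /same_piece /in_block.
have -> : (i <= z < i + len.+1) = (i <= z < i + len) by lia.
have -> : (i <= w < i + len.+1) = (i <= w < i + len) by lia.
done.
Qed.

Lemma sp_E_sub N k i E (z w : 'I_N) : same_piece k i E z w -> same_piece k i set0 z w.
Proof.
case/and3P => hz hw _; rewrite /same_piece hz hw /=; apply/forallP => e; by rewrite inE.
Qed.

Lemma allowed_E_sub N k i E : allowed (N:=N) k i E \subset allowed k i set0.
Proof.
apply/subsetP => t /allowedP h; apply/allowedP => z; move: (h z); case: ifP => // _.
exact: sp_E_sub.
Qed.

Lemma region_sub N k i E n a :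
  (forall z w : 'I_N, a <= z < a + n -> a <= w < a + n -> same_piece k i E z w) ->
  allowed (N:=N) n a set0 \subset allowed k i E.
Proof.
move=> hr; apply/subsetP => t /allowedP h; apply/allowedP => z; move: (h z).
case: ifP => hz.
  move=> /sp_block /andP[ht _].
  have hzz := hr z z hz hz; have /andP[-> _] := sp_block hzz.
  exact: hr.
move/eqP => ->; case: ifP => // hb; exact: sp_refl.
Qed.

Lemma tperm_allowed N k i E (q w : 'I_N) : same_piece k i E q w -> tperm q w \in allowed k i E.
Proof.
move=> hqw; have /andP[hq hw] := sp_block hqw.
apply/allowedP => z; case: tpermP => [->|->|/eqP nq /eqP nw].
- by rewrite hq sp_sym.
- by rewrite hw.
- by case: ifP => // hz; exact: sp_refl.
Qed.

Lemma allowed0 N i E (t : {perm 'I_N}) : t \in allowed 0 i E -> t = 1%g.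
Proof.
move/allowedP => h; apply/permP => z; move: (h z); rewrite perm1.
by rewrite /in_block (_ : (i <= z < i + 0) = false) /=; [move/eqP|lia].
Qed.

Lemma allowed_big N len i E : N <= i + len ->
  allowed (N:=N) len.+1 i E = allowed len i E.
Proof.
move=> hN; apply/setP => t; rewrite !inE; apply: eq_forallb => z.
have hz := ltn_ord z.
have -> : in_block len.+1 i z = in_block len i z by rewrite /in_block; lia.
case: ifP => // _; rewrite sp_succ //; [have := ltn_ord (t z); lia | lia].
Qed.

Lemma allowed_fixp N len i E (p : 'I_N) (t : {perm 'I_N}) : nat_of_ord p = i + len ->
  t \in allowed len i E -> t p = p.
Proof.
move=> hp /allowedP h; move: (h p); rewrite /in_block hp.
by rewrite (_ : (i <= i + len < i + len) = false) ?ltnn ?andbF // => /eqP.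
Qed.

Lemma allowed_sub_succ N len i E :
  allowed (N:=N) len i E \subset allowed len.+1 i E.
Proof.
apply/subsetP => t /allowedP h; apply/allowedP => z; move: (h z).
case: (boolP (in_block len i z)) => hz.
  move=> hs; have /andP[ht _] := sp_block hs.
  have -> : in_block len.+1 i z by move: hz; rewrite /in_block; lia.
  move: ht hz; rewrite /in_block => ht hz.
  rewrite sp_succ //; lia.
move/eqP => ->; case: ifP => // hb; exact: sp_refl.
Qed.

Lemma allowed_fix_p N len i E (p : 'I_N) (t : {perm 'I_N}) : nat_of_ord p = i + len ->
  t \in allowed len.+1 i E -> t p = p -> t \in allowed len i E.
Proof.
move=> hp /allowedP h tp; apply/allowedP => z; move: (h z).
case: (boolP (in_block len i z)) => hz.
  have -> : in_block len.+1 i z by move: hz; rewrite /in_block; lia.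
  move=> hs; have /andP[ht _] := sp_block hs.
  have hzp : z != p by apply/eqP => e; move: hz; rewrite e /in_block hp; lia.
  have htp : t z != p by rewrite -{1}tp (inj_eq perm_inj).
  move: hz ht hzp htp; rewrite /in_block => hz ht hzp htp.
  have htp' : (nat_of_ord (t z)) != i + len by rewrite -hp.
  rewrite -sp_succ //; lia.
case: (eqVneq z p) => [->|hzp]; first by rewrite tp.
case: ifP => // hb; move: hz hb hzp; rewrite /in_block => hz hb /eqP hzp.
exfalso; apply: hzp; apply: val_inj => /=; rewrite hp; lia.
Qed.

Lemma sum_decomp (R : realFieldType) N len i E (p : 'I_N) (F : {perm 'I_N} -> R) :
  nat_of_ord p = i + len ->
  (\sum_(t in allowed len.+1 i E) F t =
  \sum_(q in [set q | same_piece len.+1 i E q p])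
     \sum_(u in allowed len i E) F (u * tperm q p)%g)%R.
Proof.
move=> hp.
rewrite (partition_big (fun t : {perm 'I_N} => t p) (fun q => q \in [set q | same_piece len.+1 i E q p])) /=; last first.
  move=> t /allowedP h; rewrite inE; move: (h p).
  by rewrite (_ : in_block len.+1 i p) //; rewrite /in_block hp; lia.
apply: eq_bigr => q; rewrite inE => hq.
rewrite (reindex_inj (mulIg (tperm q p))) /=.
apply: eq_bigl => u.
have tqH := tperm_allowed hq.
apply/andP/idP => [[hu /eqP hup]|hu].
  have hu' : u = (u * tperm q p * tperm q p)%g by rewrite -mulgA tperm2 mulg1.
  rewrite hu'; apply: (@allowed_fix_p _ len i E p) => //.
    by rewrite groupM.
  by rewrite permM hup tpermL.
split.
  rewrite groupM //; exact: (subsetP (allowed_sub_succ _ _ _)).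
by rewrite permM (allowed_fixp hp hu) tpermR.
Qed.

Local Open Scope ring_scope.

Lemma avg_decomp (R : realFieldType) N len i E (p : 'I_N) (f : {perm 'I_N} -> R) s :
  nat_of_ord p = i + len ->
  avg (allowed len.+1 i E) f s =
  (\sum_(q in [set q | same_piece len.+1 i E q p])
     avg (allowed len i E) f (tperm q p * s)%g) / (#|[set q | same_piece len.+1 i E q p]|)%:R.
Proof.
move=> hp.
have hc : (#|allowed len.+1 i E|)%:R = (#|[set q | same_piece len.+1 i E q p]|)%:R * (#|allowed len i E|)%:R :> R.
  have := @sum_decomp R N len i E p (fun _ => (1:R)) hp.
  rewrite sumr_const (eq_bigr (fun _ => (#|allowed len i E|)%:R)); last by move=> q _; rewrite sumr_const.
  rewrite sumr_const => ->; by rewrite mulr_natl.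
rewrite /avg (sum_decomp _ _ hp) hc -mulr_suml invfM mulrA [RHS]mulrAC.
congr (_ * _ * _); apply: eq_bigr => q _.
by apply: eq_bigr => u _; rewrite mulgA.
Qed.

Local Close Scope ring_scope.

Definition Phi N (x : {perm 'I_N}) : nat := \sum_(z : 'I_N) z * x z.

Lemma sum_two N (F G : 'I_N -> nat) (z z1 : 'I_N) : z != z1 ->
  (forall u, u != z -> u != z1 -> F u = G u) ->
  \sum_u F u + G z + G z1 = \sum_u G u + F z + F z1.
Proof.
move=> nz h.
have eF : \sum_u F u = F z + (F z1 + \sum_(u | (u != z) && (u != z1)) F u).
  by rewrite (bigD1 z) //; congr (_ + _); rewrite (bigD1 z1) //= eq_sym.
have eG : \sum_u G u = G z + (G z1 + \sum_(u | (u != z) && (u != z1)) G u).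
  by rewrite (bigD1 z) //; congr (_ + _); rewrite (bigD1 z1) //= eq_sym.
have eR : \sum_(u | (u != z) && (u != z1)) F u = \sum_(u | (u != z) && (u != z1)) G u.
  by apply: eq_bigr => u /andP[]; apply: h.
rewrite eF eG eR; lia.
Qed.

Lemma Phi_swap N (x : {perm 'I_N}) (z z1 : 'I_N) : nat_of_ord z1 = z.+1 ->
  Phi (tperm z z1 * x)%g + x z1 = Phi x + x z.
Proof.
move=> h1; have nz : z != z1 by apply/eqP => e; move: h1; rewrite e; lia.
have hFG : forall u : 'I_N, u != z -> u != z1 -> u * (tperm z z1 * x)%g u = u * x u.
  by move=> u h2 h3; rewrite permM tpermD // eq_sym.
have := @sum_two N (fun u => u * (tperm z z1 * x)%g u) (fun u => u * x u) z z1 nz hFG.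
rewrite !permM tpermL tpermR /Phi h1 !mulSn => HH.
set A := x z in HH *; set B := x z1 in HH *.
set S1 := \sum_(u < N) _ in HH *.
set S2 := \sum_(u < N) _ in HH *.
lia.
Qed.



Lemma top_exists N n a (s : {perm 'I_N}) : a + n <= N ->
  exists2 t, t \in allowed n a set0 & asc (t * s)%g a (a + n).
Proof.
move=> hN.
have [t tK tmax] := @arg_maxnP _ 1%g (fun t => t \in allowed n a set0) (fun t => Phi (t * s)%g) (group1 (grp n a set0)).
exists t => //.
set x := (t * s)%g.
have adj : forall (z z1 : 'I_N), nat_of_ord z1 = z.+1 -> a <= z -> z1 < a + n -> x z < x z1.
  move=> z z1 h1 az z1n.
  case: (ltngtP (x z) (x z1)) => // [hlt|heq]; last first.
    by move/val_inj/perm_inj: heq => e; move: h1; rewrite e; lia.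
  have tau : tperm z z1 \in allowed n a set0.
    apply: tperm_allowed; rewrite /same_piece /in_block; apply/and3P; split; try lia.
    by apply/forallP => e; rewrite inE.
  have := tmax (tperm z z1 * t)%g (groupM tau tK).
  rewrite /= -mulgA -/x => hle.
  have : Phi x < Phi (tperm z z1 * x)%g by rewrite -(ltn_add2r (x z1)) Phi_swap // ltn_add2l.
  by rewrite ltnNge hle.
move=> z z'.
move: {2}(z' - z) (erefl (z' - z)) => d; elim: d z z' => [|d IH] z z' hd az zz' z'b.
  lia.
case: d IH hd => [|d] IH hd.
  apply: adj => //; lia.
have hw : z.+1 < N by lia.
apply: (@ltn_trans (x (Ordinal hw))).
  apply: adj => //=; lia.
apply: (IH (Ordinal hw)) => /=; lia.
Qed.

Lemma region_cnt N n a (t s : {perm 'I_N}) X Y : t \in allowed n a set0 ->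
  (X <= a) || (a + n <= X) -> cnt (t * s)%g X Y = cnt s X Y.
Proof.
move=> /allowedP h hX; apply: cnt_perm_inv => z; move: (h z).
case: ifP => hz; last by move/eqP ->.
move/sp_block => /andP[ht _]; move: hz ht; rewrite /in_block; lia.
Qed.

Lemma tau_cnt N (q p : 'I_N) (x : {perm 'I_N}) X Y : (q < X) = (p < X) ->
  cnt (tperm q p * x)%g X Y = cnt x X Y.
Proof.
move=> h; apply: cnt_perm_inv => z; case: tpermP => [->|->|] //.
Qed.

Lemma cnt_tau_p N (q p : 'I_N) (x : {perm 'I_N}) Y : q <= p ->
  cnt (tperm q p * x)%g p Y + (x q < Y) = cnt x p.+1 Y.
Proof.
move=> qp; rewrite /cnt /cntI [RHS](bigD1 q) /=; last by lia.
rewrite addnC; congr (_ + _).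
rewrite (reindex_inj (@perm_inj _ (tperm q p))) /=.
apply: eq_big => z.
  case: tpermP => [->|->|h1 h2]; rewrite -(inj_eq val_inj) /=.
  - by rewrite ltnn eqxx andbF.
  - lia.
  - have h3 : (z : nat) <> p by move=> e; apply: h2; apply: val_inj.
    have h4 : (z : nat) <> q by move=> e; apply: h1; apply: val_inj.
    lia.
by move=> _; rewrite permM tpermK.
Qed.

Lemma piece_start N len i E (p : 'I_N) : nat_of_ord p = i + len ->
  exists c : nat, forall q : 'I_N, same_piece len.+1 i E q p = (c <= q <= p).
Proof.
move=> hp.
have pP : same_piece len.+1 i E p p by apply: sp_refl; rewrite /in_block hp; lia.
have [c cP cmin] := @arg_minnP _ p (fun q => same_piece len.+1 i E q p) (fun q => nat_of_ord q) pP.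
exists c => q; apply/idP/idP.
  move=> hq; rewrite cmin //=; case/and3P: hq => hq1 _ _; move: hq1; rewrite /in_block hp; lia.
move=> /andP[cq qp].
case/and3P: cP => hc _ /forallP hce.
rewrite /same_piece; apply/and3P; split.
- move: hc; rewrite /in_block; lia.
- rewrite /in_block; lia.
- apply/forallP => e; apply/implyP => he; move: (hce e); rewrite he /=; lia.
Qed.

Definition incr (R : realFieldType) N (f : {perm 'I_N} -> R) :=
  forall s s', ge' s s' -> (f s' <= f s)%R.

Local Open Scope ring_scope.

Lemma avg0 (R : realFieldType) N i E (f : {perm 'I_N} -> R) s :
  avg (allowed 0 i E) f s = f s.
Proof.
apply: (@avg_fix R N (grp 0 i E)) => t /allowed0 ->; by rewrite mul1g.
Qed.

Lemma L1 (R : realFieldType) N len i E (f : {perm 'I_N} -> R) :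
  incr f -> incr (avg (allowed len i E) f).
Proof.
elim: len f => [|len IH] f hf.
  by move=> s s' h; rewrite !avg0; exact: hf.
case: (leqP N (i + len)) => hN.
  rewrite allowed_big //; exact: IH.
set p : 'I_N := Ordinal hN.
have hp : nat_of_ord p = (i + len)%N by [].
have [c hc] := piece_start E hp.
set g := avg (allowed len i E) f.
have hg : incr g := IH f hf.
have ginv : forall t x, t \in allowed len i E -> g (t * x)%g = g x.
  by move=> t x ht; apply: (@avg_inv R N (grp len i E)).
have cp : (c <= p)%N.
  have := hc p; rewrite sp_refl ?leqnn ?andbT //; rewrite /in_block hp; lia.
have K1 : allowed (p - c).+1 c set0 \subset allowed len.+1 i E.
  apply: region_sub => z w hz hw; apply: (@sp_trans _ _ _ _ z p w).
    by rewrite hc; lia.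
  by rewrite sp_sym hc; lia.
have K2 : allowed (p - c) c set0 \subset allowed len i E.
  apply: region_sub => z w hz hw; rewrite -sp_succ; try lia.
  apply: (@sp_trans _ _ _ _ z p w).
    by rewrite hc; lia.
  by rewrite sp_sym hc; lia.
have ep : (c + (p - c).+1 = p.+1)%N by lia.
have ep2 : (c + (p - c) = p)%N by lia.
move=> s s' hss.
have hN1 : (c + (p - c).+1 <= N)%N by rewrite ep.
have [t1 t1K ax] := top_exists s hN1.
have [t1' t1K' ax'] := top_exists s' hN1.
rewrite ep in ax ax'.
rewrite -(avg_inv f s (subsetP K1 _ t1K)) -(avg_inv f s' (subsetP K1 _ t1K')).
set x := (t1 * s)%g; set x' := (t1' * s')%g.
have hxs : forall X Y, ((X <= c) || (p.+1 <= X))%N -> cnt x X Y = cnt s X Y.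
  by move=> X Y hX; apply: region_cnt t1K _; rewrite ep.
have hxs' : forall X Y, ((X <= c) || (p.+1 <= X))%N -> cnt x' X Y = cnt s' X Y.
  by move=> X Y hX; apply: region_cnt t1K' _; rewrite ep.
rewrite !(avg_decomp _ _ _ hp).
apply: ler_wpM2r; first by rewrite invr_ge0 ler0n.
apply: ler_sum => q; rewrite inE hc => /andP[cq qp].
have hN2 : (c + (p - c) <= N)%N by rewrite ep2; exact: ltnW.
have [t2 t2K ay] := top_exists (tperm q p * x)%g hN2.
have [t2' t2K' ay'] := top_exists (tperm q p * x')%g hN2.
rewrite ep2 in ay ay'.
have e1 := ginv _ (tperm q p * x)%g (subsetP K2 _ t2K).
have e2 := ginv _ (tperm q p * x')%g (subsetP K2 _ t2K').
rewrite -/g -e1 -e2.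
apply: hg.
apply: (@sorted_ge _ _ _ c p); first by apply/andP; split => //; exact: ltnW.
  exact: ay.
move=> X Y hX.
rewrite (region_cnt _ _ t2K); last by rewrite ep2.
rewrite (region_cnt _ _ t2K'); last by rewrite ep2.
case: (ltngtP X p) => hXp.
- have hXc : (X <= c)%N by lia.
  rewrite !tau_cnt; try lia.
  rewrite hxs ?hxs' ?hXc //; exact: hss.
- have hXc : (p.+1 <= X)%N by lia.
  rewrite !tau_cnt; try lia.
  rewrite hxs ?hxs' ?hXc ?orbT //; exact: hss.
- rewrite hXp.
  have e := cnt_tau_p x Y qp; have e' := cnt_tau_p x' Y qp.
  have hA : (cnt x' p.+1 Y <= cnt x p.+1 Y)%N.
    rewrite hxs ?hxs' ?leqnn ?orbT //; exact: hss.
  have hC : (cnt x' c Y <= cnt x c Y)%N.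
    rewrite hxs ?hxs' ?leqnn //; exact: hss.
  case: (boolP (x' q < Y)%N) => h'.
    rewrite h' /= -?hp in e'.
    case: (boolP (x q < Y)%N) => h; [rewrite h /= -?hp in e| rewrite (negbTE h) /= -?hp in e]; lia.
  rewrite (negbTE h') /= -?hp in e'.
  have {}h' : (Y <= x' q)%N by rewrite leqNgt.
  case: (boolP (x q < Y)%N) => h; last by rewrite (negbTE h) /= -?hp in e; lia.
  rewrite h /= -?hp in e.
  have f1 : cntI x c q.+1 Y = (q.+1 - c)%N.
    apply: cntI_all; first by apply: leq_ltn_trans qp _.
    move=> z /andP[cz zq]; case: (ltngtP z q) => hzq.
    - apply: ltn_trans h; apply: ax => //; lia.
    - lia.
    - by rewrite (val_inj hzq).
  have f2 : cntI x' q p.+1 Y = 0%N.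
    apply: cntI_none => z /andP[qz zp]; case: (ltngtP q z) => hzq.
    - apply: leq_trans h' _; apply: ltnW; apply: ax' => //; lia.
    - lia.
    - by rewrite -(val_inj hzq).
  have f3 : (cntI x' c q Y <= q - c)%N by apply: cntI_le; exact: leq_trans qp (ltnW hN).
  have s1 := @cntI_split _ x 0 c p.+1 Y. have s2 := @cntI_split _ x c q.+1 p.+1 Y.
  have s3 := @cntI_split _ x' 0 c p.+1 Y. have s4 := @cntI_split _ x' c q p.+1 Y.
  rewrite /cnt in e e' hA hC *.
  have g1 : (0 <= c <= p.+1)%N by lia. have g2 : (c <= q.+1 <= p.+1)%N by lia.
  have g3 : (c <= q <= p.+1)%N by lia.
  move: (s1 g1) (s2 g2) (s3 g1) (s4 g3) => {s1 s2 s3 s4}; lia.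
Qed.

Local Close Scope ring_scope.

Local Open Scope ring_scope.

Lemma cheb (R : realFieldType) (I : finType) (P : {set I}) (a b : I -> R) :
  (forall q q', q \in P -> q' \in P -> 0 <= (a q - a q') * (b q - b q')) ->
  (\sum_(q in P) a q) / (#|P|)%:R * (\sum_(q in P) b q) <= \sum_(q in P) a q * b q.
Proof.
move=> h.
have key : 0 <= \sum_(q in P) \sum_(q' in P) (a q - a q') * (b q - b q').
  by apply: sumr_ge0 => q qP; apply: sumr_ge0 => q' q'P; exact: h.
have ex : \sum_(q in P) \sum_(q' in P) (a q - a q') * (b q - b q') =
   (#|P|)%:R * (\sum_(q in P) a q * b q) *+ 2 - (\sum_(q in P) a q) * (\sum_(q in P) b q) *+ 2.
  have e1 : forall q, \sum_(q' in P) (a q - a q') * (b q - b q') =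
     (#|P|)%:R * (a q * b q) - a q * (\sum_(q' in P) b q') - b q * (\sum_(q' in P) a q')
     + \sum_(q' in P) a q' * b q'.
    move=> q.
    rewrite (eq_bigr (fun q' => a q * b q - a q * b q' - b q * a q' + a q' * b q')); last first.
      by move=> q' _; rewrite mulrBl !mulrBr; ring.
    rewrite !big_split /= !sumrN sumr_const -!mulr_sumr; ring.
  rewrite (eq_bigr _ (fun q _ => e1 q)) !big_split /= !sumrN -!mulr_suml -mulr_sumr sumr_const; ring.
case: (posnP #|P|) => hP.
  move: hP => /eqP; rewrite cards_eq0 => /eqP ->; by rewrite !big_set0 !mul0r.
rewrite ex in key.
have hn : 0 < (#|P|)%:R :> R by rewrite ltr0n.
rewrite mulrAC ler_pdivrMr //.
rewrite subr_ge0 in key.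
rewrite lerMn2r /= in key.
by rewrite [X in _ <= X]mulrC.
Qed.

Lemma mono_tau (R : realFieldType) N len i E (p : 'I_N) (v : {perm 'I_N} -> R) (s : {perm 'I_N}) (q q' : 'I_N) :
  nat_of_ord p = (i + len)%N -> incr v ->
  (forall t x, t \in allowed len i E -> v (t * x)%g = v x) ->
  same_piece len.+1 i E q p -> same_piece len.+1 i E q' p -> (s q < s q')%N ->
  v (tperm q p * s)%g <= v (tperm q' p * s)%g.
Proof.
move=> hp hv vinv hq hq' hs.
have nqq : q != q' by apply/eqP => e; move: hs; rewrite e ltnn.
set z' := tperm q p q'.
have z'P : same_piece len.+1 i E z' p.
  rewrite /z'; case: tpermP => [_|_|_ _] //.
  apply: sp_refl; rewrite /in_block hp; lia.
have z'p : z' != p.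
  by rewrite /z' -{2}(tpermL q p) (inj_eq perm_inj) eq_sym.
have z'lt : (z' < p)%N.
  case/and3P: z'P => hz _ _; move: hz z'p; rewrite /in_block -(inj_eq val_inj) /= hp; lia.
have tau1 := tperm_allowed z'P. have tau2 := tperm_allowed hq. have tau3 := tperm_allowed hq'.
set t := (tperm z' p * tperm q p * tperm q' p)%g.
have tH : t \in allowed len i E.
  apply: (allowed_fix_p hp); first by rewrite !groupM.
  by rewrite /t !permM tpermR /z' tpermK tpermL.
have ey : (tperm z' p * (tperm q p * s))%g = (t * (tperm q' p * s))%g.
  by rewrite /t -!mulgA; congr (_ * (_ * _))%g; rewrite mulgA tperm2 mul1g.
have := vinv t (tperm q' p * s)%g tH; rewrite -ey => <-.
apply: hv; apply: swap_ge z'lt _.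
by rewrite !permM tpermR /z' tpermK.
Qed.

Lemma inv_adj (R : realFieldType) N (H : {group {perm 'I_N}}) (F w : {perm 'I_N} -> R) :
  (forall t x, t \in H -> F (t * x)%g = F x) ->
  \sum_s F s * avg H w s = \sum_s F s * w s.
Proof.
move=> hF; rewrite -avg_adj; apply: eq_bigr => s _; rewrite avg_fix // => t tH; exact: hF.
Qed.

Lemma L2 (R : realFieldType) N len i E (u w : {perm 'I_N} -> R) :
  incr u -> incr w ->
  \sum_s avg (allowed len i E) u s * w s <= \sum_s u s * w s.
Proof.
elim: len u w => [|len IH] u w hu hw.
  by under eq_bigr do rewrite avg0.
case: (leqP N (i + len)) => hN.
  rewrite allowed_big //; exact: IH.
set p : 'I_N := Ordinal hN.
have hp : nat_of_ord p = (i + len)%N by [].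
have [c hc] := piece_start E hp.
set H0 := allowed len i E.
set H1 := allowed len.+1 i E.
have sub01 : H0 \subset H1 := allowed_sub_succ len i E.
set v := avg H0 u. set w' := avg H0 w.
have hv : incr v := @L1 R N len i E u hu. have hw' : incr w' := @L1 R N len i E w hw.
have vinv : forall t x, t \in H0 -> v (t * x)%g = v x.
  by move=> t x tH; apply: (@avg_inv R N (grp len i E)).
have winv : forall t x, t \in H0 -> w' (t * x)%g = w' x.
  by move=> t x tH; apply: (@avg_inv R N (grp len i E)).
have Avinv : forall t x, t \in H1 -> avg H1 v (t * x)%g = avg H1 v x.
  by move=> t x tH; apply: (@avg_inv R N (grp len.+1 i E)).
apply: le_trans (IH u w hu hw).
have e1 : forall s, avg H1 u s = avg H1 v s.
  by move=> s; rewrite /v (@avg_comp R N (grp len i E) (grp len.+1 i E)).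
under eq_bigr do rewrite e1.
rewrite -(@inv_adj R N (grp len i E) (avg H1 v) w); last first.
  by move=> t x tH; apply: Avinv; exact: (subsetP sub01).
rewrite -/w' -(@inv_adj R N (grp len i E) v w) //.
rewrite -/w'.
rewrite -(@avg_sum R N (grp len.+1 i E) (fun s => avg H1 v s * w' s)).
rewrite -(@avg_sum R N (grp len.+1 i E) (fun s => v s * w' s)).
apply: ler_sum => s _.
rewrite /= !(avg_decomp _ _ _ hp).
apply: ler_wpM2r; first by rewrite invr_ge0 ler0n.
set P := [set q | same_piece len.+1 i E q p].
have tauH : forall q, q \in P -> tperm q p \in H1.
  by move=> q; rewrite inE => hq; exact: tperm_allowed.
rewrite (eq_bigr (fun q => avg H1 v s * w' (tperm q p * s)%g)); last first.
  move=> q qP; rewrite avg_fix.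
    by rewrite Avinv // tauH.
  move=> t tH; rewrite (Avinv t) ?(winv t) //; exact: (subsetP sub01).
rewrite [X in _ <= X](eq_bigr (fun q => v (tperm q p * s)%g * w' (tperm q p * s)%g)); last first.
  move=> q qP; rewrite avg_fix // => t tH; rewrite (vinv t) ?(winv t) //.
have eAv : avg H1 v s = (\sum_(q in P) v (tperm q p * s)%g) / (#|P|)%:R.
  rewrite (avg_decomp _ _ _ hp); congr (_ / _); apply: eq_bigr => q _.
  rewrite avg_fix // => t tH; rewrite (vinv t) //.
rewrite eAv -mulr_sumr.
apply: cheb => q q'; rewrite !inE => hq hq'.
case: (ltngtP (s q) (s q')) => hs.
- apply: mulr_le0; rewrite subr_le0.
    exact: (mono_tau hp hv vinv hq hq' hs).
  exact: (mono_tau hp hw' winv hq hq' hs).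
- apply: mulr_ge0; rewrite subr_ge0.
    exact: (mono_tau hp hv vinv hq' hq hs).
  exact: (mono_tau hp hw' winv hq' hq hs).
- by move/val_inj/perm_inj: hs => ->; rewrite subrr mul0r.
Qed.

Local Close Scope ring_scope.

Local Open Scope ring_scope.

Definition dom (R : realFieldType) N (nC nU : {perm 'I_N} -> R) :=
  forall g, incr g -> \sum_s nU s * g s <= \sum_s nC s * g s.

Definition inv3 (R : realFieldType) N (nC nU : {perm 'I_N} -> R) :=
  [/\ incr nC, incr nU & dom nC nU].

Lemma incr_ext (R : realFieldType) N (f g : {perm 'I_N} -> R) :
  (forall s, f s = g s) -> incr f -> incr g.
Proof. by move=> e h s s' hs; rewrite -!e; exact: h. Qed.

Lemma inv3_step (R : realFieldType) N k i E (nC nU : {perm 'I_N} -> R) :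
  inv3 nC nU -> inv3 (step k i E nC) (step k i set0 nU).
Proof.
case=> hC hU hd; split.
- apply: (@incr_ext _ _ (avg (allowed k i E) nC)); first by move=> s; rewrite step_avg.
  exact: L1.
- apply: (@incr_ext _ _ (avg (allowed k i set0) nU)); first by move=> s; rewrite step_avg.
  exact: L1.
move=> g hg.
under eq_bigr do rewrite step_avg.
under [X in _ <= X]eq_bigr do rewrite step_avg.
rewrite (@avg_adj R N (grp k i set0)) /=.
apply: le_trans (hd _ (@L1 R N k i set0 g hg)) _.
rewrite -(@avg_adj R N (grp k i set0)) /=.
have e : forall s, avg (allowed k i set0) nC s = avg (allowed k i set0) (avg (allowed k i E) nC) s.
  move=> s; rewrite (@avg_comp R N (grp k i E) (grp k i set0)) //.
  exact: allowed_E_sub.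
under eq_bigr do rewrite e.
apply: L2 => //; exact: L1.
Qed.

Lemma inv3_fold (R : realFieldType) N k (C : R -> {set 'I_N.-1}) (ups : seq (R * 'I_(N.+1 - k)))
   (nC nU : {perm 'I_N} -> R) :
  inv3 nC nU ->
  inv3 (foldl (fun nu (p : R * 'I_(N.+1 - k)) => step k p.2 (C p.1) nu) nC ups)
       (foldl (fun nu (p : R * 'I_(N.+1 - k)) => step k p.2 (@no_censoring R N p.1) nu) nU ups).
Proof.
elim: ups nC nU => [|p ups IH] nC nU h //=.
apply: IH; exact: inv3_step.
Qed.

Lemma incr_of_increasing (R : realFieldType) N (f : {perm 'I_N} -> R) :
  incr f <-> increasing f.
Proof.
split => h s s' hs; apply: h; [exact/perm_ge_ge'|exact/perm_ge_ge'].
Qed.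

Theorem lemma3p2 (R : realFieldType) (N k : nat) (nu0 : {perm 'I_N} -> R)
    (C : R -> {set 'I_(N.-1)}) (t : R) (ups : seq (R * 'I_(N.+1 - k))) :
  (3 <= k)%N ->
  (forall s, 0 <= nu0 s) -> \sum_s nu0 s = 1 ->
  increasing (fun s => nu0 s / muN R s) ->
  cadlag C -> 0 <= t -> realization t ups ->
  increasing (fun s => law C ups nu0 s / muN R s) /\
  stoch_dom (law C ups nu0) (law (@no_censoring R N) ups nu0).
Proof.
move=> _ _ _ hinc _ _ _.
have cpos : 0 < (muN R (1%g : {perm 'I_N}))^-1.
  by rewrite invr_gt0 /muN div1r invr_gt0 ltr0n fact_gt0.
have hmu : forall s : {perm 'I_N}, muN R s = muN R 1%g := fun s => erefl.
have h0 : incr nu0.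
  move=> s s' hs; have := (proj2 (incr_of_increasing _) hinc) s s' hs.
  rewrite /= (hmu s) (hmu s') ler_pM2r //.
have [hC hU hd] := @inv3_fold R N k C ups nu0 nu0 (And3 h0 h0 (fun g _ => lexx _)).
split.
  apply/incr_of_increasing => s s' hs /=.
  rewrite (hmu s) (hmu s') ler_pM2r //; exact: hC.
move=> A hA.
pose g := fun s : {perm 'I_N} => ((s \in A)%:R : R).
have hg : incr g.
  move=> s s' hs; rewrite /g; case: (boolP (s' \in A)) => h'.
    by rewrite (hA s' s h' (proj2 (perm_ge_ge' s s') hs)).
  by rewrite ler0n.
have := hd g hg.
have e : forall nu : {perm 'I_N} -> R, \sum_(s in A) nu s = \sum_s nu s * g s.
  move=> nu; rewrite big_mkcond; apply: eq_bigr => s _; rewrite /g.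
  by case: (s \in A); rewrite ?mulr1 ?mulr0.
by rewrite -!e.
Qed.
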